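(* Let $\Sigma$ be a finite polyhedral fan, $\mathcal A=\mathcal A_\Sigma$, and let $\mathcal I$ be a flabby $\mathcal A$-module. If $\eta:\mathcal M\to\mathcal N$ is a strongly injective map of $\mathcal A$-modules and $\mathcal N$ is locally free, then the induced map $\operatorname{Hom}_{\mathcal A}(\mathcal N,\mathcal I)\to\operatorname{Hom}_{\mathcal A}(\mathcal M,\mathcal I)$ is surjective.
   Context: $\mathcal A_\tau$ ($\tau\in\Sigma$) is the graded ring of complex polynomial functions on $\operatorname{Span}\tau$ with linear functions in degree $2$, and restriction maps to faces. An $\mathcal A$-module consists of finitely generated graded $\mathcal A_\tau$-modules $\mathcal M(\tau)$ with degree-$0$ $\mathcal A_\tau$-linear restriction maps $\mathcal M(\tau)\to\mathcal M(\xi)$ for $\xi$ a face of $\tau$, compatible with composition; $\operatorname{Hom}_{\mathcal A}$ denotes degree-$0$ morphisms. $\mathcal M(\partial\sigma)$ is the space of compatible families $(m_\xi)$ over the proper faces $\xi$ of $\sigma$. $\mathcal M$ is locally free if each $\mathcal M(\sigma)$ is free over $\mathcal A_\sigma$, and flabby if each $\mathcal M(\sigma)\to\mathcal M(\partial\sigma)$ is surjective. An injective map $\mathcal M\to\mathcal N$ is strongly injective if for every $\sigma$ the inclusion $\mathcal M(\sigma)\to\mathcal N(\sigma)$ splits (as graded $\mathcal A_\sigma$-modules). *)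

(* Defs.v *)
From HB Require Import structures.
From mathcomp Require Import all_boot all_order all_algebra.
From mathcomp Require Import boolp classical_sets cardinality reals.
From mathcomp Require Import complex.
From mathcomp Require Import mpoly.

Set Implicit Arguments.
Unset Strict Implicit.
Unset Printing Implicit Defensive.

Import Order.TTheory GRing.Theory Num.Theory.
Local Open Scope ring_scope.
Local Open Scope classical_set_scope.

Definition pairing (R : realType) (n : nat) (u x : 'rV[R]_n) : R :=
  \sum_(i < n) u ord0 i * x ord0 i.

Definition conic_hull (R : realType) (n : nat) (g : seq 'rV[R]_n) : set 'rV[R]_n :=
  [set x | exists lam : 'I_(size g) -> R,
     (forall k, 0 <= lam k) /\ x = \sum_(k < size g) lam k *: g`_k].

Definition is_polyhedral_cone (R : realType) (n : nat) (s : set 'rV[R]_n) :=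
  exists g : seq 'rV[R]_n, s = conic_hull g.

(* tau is a face of sigma: the intersection of sigma with a supporting
   hyperplane {u = 0}, u >= 0 on sigma (u = 0 gives sigma itself). *)
Definition is_face (R : realType) (n : nat) (tau sigma : set 'rV[R]_n) :=
  exists u : 'rV[R]_n, (forall x, sigma x -> 0 <= pairing u x) /\
    tau = sigma `&` [set x | pairing u x = 0].

Definition is_finite_fan (R : realType) (n : nat) (S : set (set 'rV[R]_n)) :=
  [/\ finite_set S,
      (forall s, S s -> is_polyhedral_cone s),
      (forall s t, S s -> is_face t s -> S t) &
      (forall s s', S s -> S s' -> is_face (s `&` s') s /\ is_face (s `&` s') s')].

Definition span_of (R : realType) (n : nat) (t : set 'rV[R]_n) : set 'rV[R]_n :=
  [set x | exists (m : nat) (c : 'I_m -> R) (v : 'I_m -> 'rV[R]_n),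
     (forall j, t (v j)) /\ x = \sum_(j < m) c j *: v j].

(* P = C[x_1..x_n] (C = R[i]) with linear forms in degree 2;
   A_tau = P / I_tau, where I_tau is the ideal of polynomials vanishing on
   Span tau, i.e. the ring of complex polynomial functions on Span tau.
   A graded A_tau-module is encoded as a graded P-module killed by I_tau;
   A_tau-linear maps are then exactly the P-linear maps.                  *)

Notation Pol R n := (mpoly.mpoly n (complex R)).

Definition polX (R : realType) (n : nat) (i : 'I_n) : Pol R n :=
  mpoly.mpolyX (complex R) (mpoly.mnm1 i).

Definition polC (R : realType) (n : nat) (c : complex R) : Pol R n :=
  mpoly.mpolyC n c.

Definition vanishes_on (R : realType) (n : nat) (t : set 'rV[R]_n) (p : Pol R n) :=
  forall x, span_of t x -> mpoly.meval (fun i => Complex (x ord0 i) 0) p = 0.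

Record gmod (R : realType) (n : nat) := GMod {
  gcar :> lmodType (Pol R n);
  gcomp : int -> gcar -> gcar;
  gcomp_add : forall k (u v : gcar), gcomp k (u + v) = gcomp k u + gcomp k v;
  gcomp_proj : forall k j (v : gcar),
      gcomp j (gcomp k v) = if j == k then gcomp k v else 0;
  gcomp_fin : forall v : gcar,
      exists s : seq int, uniq s /\ v = \sum_(k <- s) gcomp k v;
  gcomp_const : forall k (c : complex R) (v : gcar),
      gcomp k (polC n c *: v) = polC n c *: gcomp k v;
  gcomp_var : forall k (i : 'I_n) (v : gcar),
      gcomp k (polX R i *: v) = polX R i *: gcomp (k - 2) v
}.
Arguments gcomp {R n g} k _.

Definition is_gmorph (R : realType) (n : nat) (M N : gmod R n) (f : M -> N) :=
  (forall (p : Pol R n) (u v : M), f (p *: u + v) = p *: f u + f v) /\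
  (forall k (v : M), f (gcomp k v) = gcomp k (f v)).

Definition homogeneous (R : realType) (n : nat) (M : gmod R n) (v : M) :=
  exists d : int, gcomp d v = v.

Record amod (R : realType) (n : nat) := AMod {
  amM : set 'rV[R]_n -> gmod R n;
  amres : forall t xi : set 'rV[R]_n, amM t -> amM xi
}.
Arguments amM {R n} a t.
Arguments amres {R n} a t xi _.

Definition is_amod (R : realType) (n : nat) (S : set (set 'rV[R]_n))
    (M : amod R n) :=
  forall t, S t ->
    [/\ (* M(t) is an A_t-module *)
        (forall (p : Pol R n) (v : amM M t), vanishes_on t p -> p *: v = 0),
        (exists g : seq (amM M t), forall v : amM M t,
            exists c : 'I_(size g) -> Pol R n,
              v = \sum_(k < size g) c k *: g`_k),
        (forall xi, S xi -> is_face xi t -> is_gmorph (amres M t xi)),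
        (forall v, amres M t t v = v) &
        (forall xi zeta, S xi -> S zeta -> is_face xi t -> is_face zeta xi ->
           forall v, amres M xi zeta (amres M t xi v) = amres M t zeta v)].

Definition is_amap (R : realType) (n : nat) (S : set (set 'rV[R]_n))
    (M N : amod R n) (f : forall t, amM M t -> amM N t) :=
  (forall t, S t -> is_gmorph (f t)) /\
  (forall t xi, S t -> S xi -> is_face xi t ->
     forall v, f xi (amres M t xi v) = amres N t xi (f t v)).

Definition locally_free (R : realType) (n : nat) (S : set (set 'rV[R]_n))
    (M : amod R n) :=
  forall s, S s -> exists b : seq (amM M s),
    [/\ forall k : 'I_(size b), homogeneous b`_k,
        forall v : amM M s, exists c : 'I_(size b) -> Pol R n,
          v = \sum_(k < size b) c k *: b`_k &
        forall c : 'I_(size b) -> Pol R n,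
          \sum_(k < size b) c k *: b`_k = 0 -> forall k, vanishes_on s (c k)].

(* flabby: M(s) -> M(boundary s) surjective, M(boundary s) being the
   compatible families over the proper faces of s *)
Definition flabby (R : realType) (n : nat) (S : set (set 'rV[R]_n))
    (M : amod R n) :=
  forall s, S s -> forall m : forall xi, amM M xi,
    (forall xi zeta, S xi -> S zeta -> is_face xi s -> xi <> s ->
        is_face zeta xi -> amres M xi zeta (m xi) = m zeta) ->
    exists v : amM M s, forall xi, S xi -> is_face xi s -> xi <> s ->
        amres M s xi v = m xi.

Definition strongly_injective (R : realType) (n : nat) (S : set (set 'rV[R]_n))
    (M N : amod R n) (eta : forall t, amM M t -> amM N t) :=
  is_amap S eta /\
  forall s, S s -> injective (eta s) /\
    exists r : amM N s -> amM M s, is_gmorph r /\ cancel (eta s) r.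

(* Main.v *)
Require Import Defs.
From HB Require Import structures.
From mathcomp Require Import all_boot all_order all_algebra.
From mathcomp Require Import boolp classical_sets cardinality reals.
From mathcomp Require Import complex.
From mathcomp Require Import mpoly.

Set Implicit Arguments.
Unset Strict Implicit.
Unset Printing Implicit Defensive.
Import GRing.Theory.
Local Open Scope ring_scope.

Section GLemmas.
Context (R : realType) (n : nat).

Lemma idem0 (V : zmodType) (x : V) : x = x + x -> x = 0.
Proof. by move=> H; apply: (addrI x); rewrite addr0 -H. Qed.

Lemma gcomp0 (M : gmod R n) k : gcomp k (0 : M) = 0.
Proof. by apply: idem0; rewrite -gcomp_add addr0. Qed.

Lemma gcomp_sum (M : gmod R n) k (I : Type) (s : seq I) (F : I -> M) :
  gcomp k (\sum_(i <- s) F i) = \sum_(i <- s) gcomp k (F i).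
Proof.
elim: s => [|a s IH]; first by rewrite !big_nil gcomp0.
by rewrite !big_cons gcomp_add IH.
Qed.

Lemma gcompN (M : gmod R n) k (v : M) : gcomp k (- v) = - gcomp k v.
Proof.
apply/eqP; rewrite -subr_eq0 opprK -gcomp_add addNr gcomp0 //.
Qed.

Lemma gcompB (M : gmod R n) k (u v : M) : gcomp k (u - v) = gcomp k u - gcomp k v.
Proof. by rewrite gcomp_add gcompN. Qed.

Lemma gcomp_off (M : gmod R n) (v : M) (s : seq int) j :
  v = \sum_(k <- s) gcomp k v -> j \notin s -> gcomp j v = 0.
Proof.
move=> Hv js; rewrite Hv gcomp_sum big_seq big1 // => k ks.
rewrite gcomp_proj; case: eqP => // ejk; by move: js; rewrite ejk ks.
Qed.

Lemma sum_pick (V : zmodType) (s : seq int) (F : int -> V) j :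
  uniq s -> \sum_(k <- s) (if j == k then F k else 0) = if j \in s then F j else 0.
Proof.
elim: s => [|a s IH]; first by rewrite big_nil.
rewrite big_cons /= => /andP[an us]; rewrite IH // inE.
case: eqP => [->|_]; last by rewrite add0r.
by rewrite (negbTE an) addr0.
Qed.

Lemma sum_supp (V : zmodType) (s1 s2 : seq int) (F : int -> V) :
  uniq s1 -> uniq s2 -> (forall k, k \notin s1 -> F k = 0) ->
  (forall k, k \notin s2 -> F k = 0) ->
  \sum_(k <- s1) F k = \sum_(k <- s2) F k.
Proof.
move=> u1 u2 F1 F2.
have E1 : \sum_(k <- s1) F k = \sum_(k <- filter (mem s2) s1) F k.
  rewrite big_filter [RHS]big_mkcond /=; apply: eq_bigr => k _.
  by case: ifP => // /negbT /F2 ->.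
have E2 : \sum_(k <- s2) F k = \sum_(k <- filter (mem s1) s2) F k.
  rewrite big_filter [RHS]big_mkcond /=; apply: eq_bigr => k _.
  by case: ifP => // /negbT /F1 ->.
rewrite E1 E2; apply: perm_big; apply: uniq_perm; rewrite ?filter_uniq //.
by move=> k; rewrite !mem_filter andbC.
Qed.

Lemma gm0 (M N : gmod R n) (f : M -> N) : is_gmorph f -> f 0 = 0.
Proof.
case=> Hl _; apply: idem0; have H := Hl 1 0 0; by rewrite !scale1r addr0 in H.
Qed.

Lemma gmD (M N : gmod R n) (f : M -> N) : is_gmorph f -> forall u v, f (u + v) = f u + f v.
Proof. by case=> Hl _ u v; have := Hl 1 u v; rewrite !scale1r. Qed.

Lemma gmZ (M N : gmod R n) (f : M -> N) : is_gmorph f -> forall p u, f (p *: u) = p *: f u.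
Proof. move=> Hf p u; have := (proj1 Hf) p u 0; by rewrite !addr0 (gm0 Hf) addr0. Qed.

Lemma gmN (M N : gmod R n) (f : M -> N) : is_gmorph f -> forall u, f (- u) = - f u.
Proof. by move=> Hf u; rewrite -scaleN1r (gmZ Hf) scaleN1r. Qed.

Lemma gmB (M N : gmod R n) (f : M -> N) : is_gmorph f -> forall u v, f (u - v) = f u - f v.
Proof. by move=> Hf u v; rewrite (gmD Hf) (gmN Hf). Qed.

Lemma gm_sum (M N : gmod R n) (f : M -> N) : is_gmorph f ->
  forall (J : Type) (s : seq J) (F : J -> M), f (\sum_(i <- s) F i) = \sum_(i <- s) f (F i).
Proof.
move=> Hf J s F; elim: s => [|a s IH]; first by rewrite !big_nil (gm0 Hf).
by rewrite !big_cons (gmD Hf) IH.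
Qed.

Lemma gm_mk (M N : gmod R n) (f : M -> N) :
  (forall u v, f (u + v) = f u + f v) -> (forall p u, f (p *: u) = p *: f u) ->
  (forall k v, f (gcomp k v) = gcomp k (f v)) -> is_gmorph f.
Proof. by move=> HD HZ HG; split=> // p u v; rewrite HD HZ. Qed.

Lemma gm_comp (M N P : gmod R n) (f : M -> N) (h : N -> P) :
  is_gmorph f -> is_gmorph h -> is_gmorph (h \o f).
Proof.
move=> Hf Hh; apply: gm_mk => /=.
- by move=> u v; rewrite (gmD Hf) (gmD Hh).
- by move=> p u; rewrite (gmZ Hf) (gmZ Hh).
- by move=> k v; rewrite (proj2 Hf) (proj2 Hh).
Qed.

Lemma gm_add (M N : gmod R n) (f h : M -> N) :
  is_gmorph f -> is_gmorph h -> is_gmorph (fun v => f v + h v).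
Proof.
move=> Hf Hh; apply: gm_mk => /=.
- by move=> u v; rewrite (gmD Hf) (gmD Hh) addrACA.
- by move=> p u; rewrite (gmZ Hf) (gmZ Hh) scalerDr.
- by move=> k v; rewrite (proj2 Hf) (proj2 Hh) gcomp_add.
Qed.

Lemma gm_sub (M N : gmod R n) (f h : M -> N) :
  is_gmorph f -> is_gmorph h -> is_gmorph (fun v => f v - h v).
Proof.
move=> Hf Hh; apply: gm_mk => /=.
- by move=> u v; rewrite (gmD Hf) (gmD Hh) opprD addrACA.
- by move=> p u; rewrite (gmZ Hf) (gmZ Hh) scalerBr.
- by move=> k v; rewrite (proj2 Hf) (proj2 Hh) gcompB.
Qed.

Lemma gm_id (M : gmod R n) : is_gmorph (fun v : M => v).
Proof. by []. Qed.

Lemma poly_ind (P : Pol R n -> Prop) :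
  (forall c, P (polC n c)) -> (forall i, P (polX R i)) ->
  (forall p q, P p -> P q -> P (p + q)) -> (forall p q, P p -> P q -> P (p * q)) ->
  forall p, P p.
Proof.
move=> HC HX HD HM p; rewrite (mpolyE p).
have P0 : P 0 by have := HC 0; rewrite /polC mpolyC0.
have P1 : P 1 by have := HC 1; rewrite /polC mpolyC1.
apply: big_ind => // m _.
rewrite -mul_mpolyC; apply: (HM); first exact: HC.
rewrite mpolyXE_id; apply: (big_ind P) => // i _.
move: (m i) => e; elim: e => [|k IH]; first by rewrite expr0.
by rewrite exprS; apply: (HM) => //; apply: (HX).
Qed.

Lemma decomp_ext (M : gmod R n) (v : M) (s1 s2 : seq int) :
  uniq s1 -> uniq s2 -> {subset s1 <= s2} ->
  v = \sum_(k <- s1) gcomp k v -> v = \sum_(k <- s2) gcomp k v.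
Proof.
move=> u1 u2 sub Hv; rewrite [LHS]Hv; apply: sum_supp => // k kn.
- exact: (gcomp_off Hv).
- apply: (gcomp_off Hv); apply: contra kn; exact: sub.
Qed.

End GLemmas.

Lemma count_lt (X : eqType) (a b : pred X) (l : seq X) y :
  subpred b a -> a y -> ~~ b y -> y \in l -> (count b l < count a l)%N.
Proof.
move=> ba ay nby; elim: l => // x l IH; rewrite inE => /orP[/eqP <-|yl] /=.
- rewrite ay (negbTE nby) add0n add1n ltnS; exact: sub_count.
- have h := IH yl; case bx: (b x); first by rewrite (ba _ bx) ltn_add2l.
  rewrite add0n; exact: leq_trans h (leq_addl _ _).
Qed.

Lemma maximal (U : Type) (T : set (set U)) (l : seq (set U)) x :
  (forall t, T t -> t \in l) -> T x ->
  exists s, T s /\ forall t, T t -> (s `<=` t)%classic -> t = s.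
Proof.
move=> Tl.
suff H : forall k z, T z ->
   (count (fun y => `[< T y /\ (z `<=` y)%classic /\ y <> z >]) l <= k)%N ->
   exists s, T s /\ forall t, T t -> (s `<=` t)%classic -> t = s.
  by move=> Tx; apply: (H _ x Tx (leqnn _)).
elim=> [|k IH] z Tz cnt.
- case: (pselect (exists y, T y /\ (z `<=` y)%classic /\ y <> z)) => [[y hy]|ny].
    have := @count_lt _ (fun y => `[< T y /\ (z `<=` y)%classic /\ y <> z >]) pred0 l y.
    rewrite count_pred0 => /(_ _ _ _ (Tl _ (proj1 hy))).
    have: ~~ (0 < count (fun y => `[< T y /\ (z `<=` y)%classic /\ y <> z >]) l)%N.
      by rewrite -leqNgt.
    move=> hh h; exfalso; move/negP: hh; apply; apply: h => //; by apply/asboolP.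
  exists z; split => // t Tt zt; apply: contrapT => nt; apply: ny; by exists t.
- case: (pselect (exists y, T y /\ (z `<=` y)%classic /\ y <> z)) => [[y [Ty [zy nyz]]]|ny];
    last first.
    exists z; split => // t Tt zt; apply: contrapT => nt; apply: ny; by exists t.
  apply: (IH y Ty); rewrite -ltnS; apply: leq_trans cnt; apply: (count_lt (y := y)).
  + move=> w /asboolP [Tw [yw nwy]]; apply/asboolP; split => //; split.
      by move=> p /zy /yw.
    move=> wz; apply: nwy; rewrite wz in yw *; apply/seteqP; split => //.
  + by apply/asboolP.
  + by apply/negP => /asboolP [_ [_]].
  + exact: Tl.
Qed.

Unset Implicit Arguments.
Section Main.
Context (R : realType) (n : nat) (S : set (set 'rV[R]_n)) (M N I : amod R n)
  (eta : forall t, amM M t -> amM N t) (g : forall t, amM M t -> amM I t).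
Hypothesis HN : is_amod S N.
Hypothesis HI : is_amod S I.
Hypothesis flI : flabby S I.
Hypothesis sinj : strongly_injective S eta.
Hypothesis lfN : locally_free S N.
Hypothesis gmap : is_amap S g.

Definition good (T : set (set 'rV[R]_n)) (f : forall t, amM N t -> amM I t) :=
  [/\ forall t, T t -> is_gmorph (f t),
      forall t xi, T t -> T xi -> is_face xi t ->
        forall v, f xi (amres N t xi v) = amres I t xi (f t v) &
      forall t, T t -> forall v, f t (eta t v) = g t v].

Lemma face_sub (xi t : set 'rV[R]_n) : is_face xi t -> (xi `<=` t)%classic.
Proof. by case=> u [_ ->] x []. Qed.

Lemma extend (T : set (set 'rV[R]_n)) (s : set 'rV[R]_n) f :
  (T `<=` S)%classic -> T s -> (forall t, T t -> (s `<=` t)%classic -> t = s) ->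
  (forall t xi, T t -> S xi -> is_face xi t -> T xi) ->
  good (T `\ s)%classic f -> exists f', good T f'.
Proof.
move=> TS Ts smax Tdown [fG fC fE].
have Ss := TS _ Ts.
have PF : forall xi, S xi -> is_face xi s -> xi <> s -> (T `\ s)%classic xi.
  by move=> xi Sxi fxi nxi; split => //; exact: Tdown Ts Sxi fxi.
case: (sinj) => etamap /(_ s Ss) [_ [r [rG rK]]].
case: (HN s Ss) => _ _ resN resNid resNc.
case: (HI s Ss) => Ikill _ resI resIid resIc.
case: (gmap) => gG gC.
case: (etamap) => etaG etaC.
case: (lfN s Ss) => b [_ bspan bfree].
pose D xi (v : amM N s) := f xi (amres N s xi v) - amres I s xi (g s (r v)).
have DG : forall xi, S xi -> is_face xi s -> xi <> s -> is_gmorph (D xi).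
  move=> xi Sxi fxi nxi; apply: gm_sub.
  - exact: (gm_comp (resN _ Sxi fxi) (fG _ (PF _ Sxi fxi nxi))).
  - exact: (gm_comp (gm_comp rG (gG _ Ss)) (resI _ Sxi fxi)).
have Deta : forall xi, S xi -> is_face xi s -> xi <> s -> forall u, D xi (eta s u) = 0.
  move=> xi Sxi fxi nxi u; rewrite /D rK -(etaC s xi Ss Sxi fxi) fE; last exact: PF.
  by rewrite -(gC s xi Ss Sxi fxi) subrr.
have Hw : forall k : 'I_(size b), exists w : amM I s, forall xi, S xi -> is_face xi s ->
    xi <> s -> amres I s xi w = D xi b`_k.
  move=> k; apply: (flI s Ss (fun xi => D xi b`_k)).
  move=> xi zeta Sxi Sz fxi nxi fz.
  have Tz : (T `\ s)%classic zeta.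
    split; first exact: Tdown (Tdown _ _ Ts Sxi fxi) Sz fz.
    move=> /= zs; apply: nxi; apply: smax; first exact: Tdown Ts Sxi fxi.
    by rewrite -zs; exact: face_sub.
  case: (HI xi Sxi) => _ _ resIx _ _.
  rewrite /D (gmB (resIx _ Sz fz)) -(fC xi zeta (PF _ Sxi fxi nxi) Tz fz).
  by rewrite (resNc xi zeta Sxi Sz fxi fz) (resIc xi zeta Sxi Sz fxi fz).
have [w Hw'] := boolp.choice Hw.
have [cf Hcf] := boolp.choice bspan.
pose h v := \sum_(k < size b) cf v k *: w k.
have hrep : forall c v, v = \sum_(k < size b) c k *: b`_k -> h v = \sum_k c k *: w k.
  move=> c v Hv; apply/eqP; rewrite -subr_eq0 -sumrB; apply/eqP; apply: big1 => k _.
  rewrite -scalerBl; apply: Ikill; apply: (bfree (fun k => cf v k - c k)).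
  under eq_bigr do rewrite scalerBl.
  by rewrite sumrB -Hcf -Hv subrr.
have hD : forall u v, h (u + v) = h u + h v.
  move=> u v; rewrite (hrep (fun k => cf u k + cf v k) (u + v)).
    by rewrite /h -big_split; apply: eq_bigr => k _; rewrite scalerDl.
  rewrite [in LHS](Hcf u) [in LHS](Hcf v) -big_split; apply: eq_bigr => k _ /=.
  by rewrite scalerDl.
have hZ : forall p u, h (p *: u) = p *: h u.
  move=> p u; rewrite (hrep (fun k => p * cf u k) (p *: u)).
    by rewrite /h scaler_sumr; apply: eq_bigr => k _; rewrite scalerA.
  rewrite [in LHS](Hcf u) scaler_sumr; apply: eq_bigr => k _ /=.
  by rewrite scalerA.
have h0 : h 0 = 0 by apply: idem0; rewrite -hD addr0.
have hres : forall xi, S xi -> is_face xi s -> xi <> s -> forall v,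
    amres I s xi (h v) = D xi v.
  move=> xi Sxi fxi nxi v; rewrite /h (gm_sum (resI _ Sxi fxi)).
  under eq_bigr do rewrite (gmZ (resI _ Sxi fxi)) Hw' //.
  rewrite [in RHS](Hcf v) (gm_sum (DG _ Sxi fxi nxi)); apply: eq_bigr => k _.
  by rewrite (gmZ (DG _ Sxi fxi nxi)).
have [sv Hsv] := boolp.choice (@gcomp_fin _ _ (amM N s)).
pose H v := \sum_(k <- sv v) gcomp k (h (gcomp k v)).
have Hany : forall v s', uniq s' -> v = \sum_(k <- s') gcomp k v ->
    H v = \sum_(k <- s') gcomp k (h (gcomp k v)).
  move=> v s' us' Hv; case: (Hsv v) => us Hv0; apply: sum_supp => // k kn.
  - by rewrite (gcomp_off Hv0 kn) h0 gcomp0.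
  - by rewrite (gcomp_off Hv kn) h0 gcomp0.
have HD : forall u v, H (u + v) = H u + H v.
  move=> u v; pose s' := undup (sv u ++ sv v ++ sv (u + v)).
  have us' : uniq s' by exact: undup_uniq.
  case: (Hsv u) => uu Hu; case: (Hsv v) => uv Hv; case: (Hsv (u + v)) => uuv Huv.
  rewrite (Hany u s') //; last first.
    by apply: (decomp_ext uu) => // k kin; rewrite mem_undup !mem_cat kin.
  rewrite (Hany v s') //; last first.
    by apply: (decomp_ext uv) => // k kin; rewrite mem_undup !mem_cat kin orbT.
  rewrite (Hany (u + v) s') //; last first.
    by apply: (decomp_ext uuv) => // k kin; rewrite mem_undup !mem_cat kin !orbT.
  rewrite -big_split; apply: eq_bigr => k _.
  by rewrite gcomp_add hD gcomp_add.
have HZq : forall q e, (forall k (v : amM N s), gcomp k (q *: v) = q *: gcomp (k - e) v) ->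
    (forall k (v : amM I s), gcomp k (q *: v) = q *: gcomp (k - e) v) ->
    forall u, H (q *: u) = q *: H u.
  move=> q e qN qI u; case: (Hsv u) => us Hu.
  rewrite (Hany _ (map (fun k => k + e) (sv u))).
  - rewrite big_map /H scaler_sumr; apply: eq_bigr => k _.
    by rewrite qN addrK hZ qI addrK.
  - rewrite map_inj_uniq //; exact: addIr.
  - rewrite big_map [in LHS]Hu scaler_sumr; apply: eq_bigr => k _.
    by rewrite qN addrK.
have HZ : forall p u, H (p *: u) = p *: H u.
  apply: poly_ind.
  - move=> c; apply: (HZq _ 0) => k v; by rewrite gcomp_const subr0.
  - move=> i; apply: (HZq _ 2) => k v; exact: gcomp_var.
  - by move=> p q Hp Hq u; rewrite scalerDl HD Hp Hq scalerDl.
  - by move=> p q Hp Hq u; rewrite -scalerA Hp Hq scalerA.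
have HG : forall k v, H (gcomp k v) = gcomp k (H v).
  move=> j v; case: (Hsv v) => us Hv.
  rewrite (Hany (gcomp j v) [:: j]) //; last by rewrite big_seq1 gcomp_proj eqxx.
  rewrite big_seq1 gcomp_proj eqxx /H gcomp_sum.
  under eq_bigr do rewrite gcomp_proj.
  rewrite (sum_pick (fun k => gcomp k (h (gcomp k v)))) //.
  case: ifP => // /negbT jn; by rewrite (gcomp_off Hv jn) h0 gcomp0.
have HGm : is_gmorph H by apply: gm_mk.
have Hres : forall xi, S xi -> is_face xi s -> xi <> s -> forall v,
    amres I s xi (H v) = D xi v.
  move=> xi Sxi fxi nxi v; case: (Hsv v) => us Hv.
  rewrite /H (gm_sum (resI _ Sxi fxi)) [in RHS]Hv (gm_sum (DG _ Sxi fxi nxi)).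
  apply: eq_bigr => k _.
  by rewrite (proj2 (resI _ Sxi fxi)) hres // -(proj2 (DG _ Sxi fxi nxi)) gcomp_proj eqxx.
pose fs v := g s (r v) + H (v - eta s (r v)).
have fsG : is_gmorph fs.
  apply: gm_add; first exact: (gm_comp rG (gG _ Ss)).
  exact: (gm_comp (gm_sub (gm_id _) (gm_comp rG (etaG _ Ss))) HGm).
have fsE : forall u, fs (eta s u) = g s u.
  by move=> u; rewrite /fs rK subrr (gm0 HGm) addr0.
have fsC : forall xi, S xi -> is_face xi s -> xi <> s -> forall v,
    f xi (amres N s xi v) = amres I s xi (fs v).
  move=> xi Sxi fxi nxi v; rewrite /fs (gmD (resI _ Sxi fxi)) Hres //.
  rewrite (gmB (DG _ Sxi fxi nxi)) Deta // subr0 /D.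
  by rewrite addrC subrK.
pose f' := fun t => match pselect (t = s) with
  | left e => eq_rect s (fun t0 => amM N t0 -> amM I t0) fs t (esym e)
  | right _ => f t end.
have f's : f' s = fs.
  by rewrite /f'; case: pselect => // e; rewrite (Prop_irrelevance e erefl).
have f't : forall t, t <> s -> f' t = f t.
  by move=> t nt; rewrite /f'; case: pselect.
exists f'; split.
- move=> t Tt; case: (pselect (t = s)) => [et|nt].
    by subst t; rewrite f's.
  by rewrite f't //; apply: fG; split.
- move=> t xi Tt Txi fxi v.
  case: (pselect (t = s)) => [et|nt]; case: (pselect (xi = s)) => [exi|nxi].
  + subst t; subst xi; by rewrite f's resNid resIid.
  + subst t; rewrite f's f't //; apply: fsC => //; exact: TS.
  + subst xi; exfalso; apply: nt; apply: smax => //; exact: face_sub.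
  + rewrite !f't //; apply: fC => //; split.
- move=> t Tt u; case: (pselect (t = s)) => [et|nt].
    by subst t; rewrite f's fsE.
  by rewrite f't // fE //; split.
Qed.

End Main.

Lemma build (R : realType) (n : nat) (S : set (set 'rV[R]_n)) (M N I : amod R n)
  (eta : forall t, amM M t -> amM N t) (g : forall t, amM M t -> amM I t)
  (l : seq (set 'rV[R]_n)) :
  is_amod S N -> is_amod S I -> flabby S I -> strongly_injective S eta ->
  locally_free S N -> is_amap S g -> (forall t, S t -> t \in l) ->
  forall k (T : set (set 'rV[R]_n)), (T `<=` S)%classic ->
  (forall t xi, T t -> S xi -> is_face xi t -> T xi) ->
  (count (fun x => `[< T x >]) l <= k)%N -> exists f, good _ _ _ _ _ eta g T f.
Proof.
move=> HN HI flI sinj lfN gmap Sl k; elim: k => [|k IH] T TS Tdown cnt.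
- case: (pselect (exists x, T x)) => [[x Tx]|nT].
    exfalso; have h : (count pred0 l < count (fun x => `[< T x >]) l)%N.
      apply: (count_lt (y := x)) => //; [by apply/asboolP | exact: Sl (TS _ Tx)].
    by rewrite count_pred0 in h; rewrite leqNgt h in cnt.
  exists (fun t _ => 0); split => t *; exfalso; apply: nT; by exists t.
- case: (pselect (exists x, T x)) => [[x Tx]|nT]; last first.
    exists (fun t _ => 0); split => t *; exfalso; apply: nT; by exists t.
  have [s [Ts smax]] := maximal (fun t Tt => Sl t (TS t Tt)) Tx.
  have [f Hf] : exists f, good _ _ _ _ _ eta g (T `\ s)%classic f.
    apply: IH.
    + by move=> t [Tt _]; exact: TS.
    + move=> t xi [Tt nts] Sxi fxi; split; first exact: Tdown Tt Sxi fxi.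
      move=> /= exs; apply: nts; apply: smax => //; rewrite -exs; exact: (face_sub _ _).
    + rewrite -ltnS; apply: leq_trans cnt; apply: (count_lt (y := s)).
      * by move=> w /asboolP [Tw _]; apply/asboolP.
      * by apply/asboolP.
      * by apply/negP => /asboolP [_ /=].
      * exact: Sl (TS _ Ts).
  have := (extend _ _ _ _ _ _ eta g HN HI flI sinj lfN gmap _ _ _ TS Ts smax Tdown Hf). by [].
Qed.

Theorem proposition6p5 (R : realType) (n : nat) (S : set (set 'rV[R]_n))
    (M N I : amod R n) (eta : forall t, amM M t -> amM N t) :
  is_finite_fan S -> is_amod S M -> is_amod S N -> is_amod S I ->
  flabby S I -> strongly_injective S eta -> locally_free S N ->
  forall g : forall t, amM M t -> amM I t, is_amap S g ->
  exists f : forall t, amM N t -> amM I t,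
    is_amap S f /\ (forall t, S t -> forall v, f t (eta t v) = g t v).
Proof.
move=> [finS _ _ _] _ HN HI flI sinj lfN g gmap.
have [l Sl] := (iffLR (finite_seqP S)) finS.
have Sl' : forall t, S t -> t \in l by move=> t; rewrite Sl.
have [f [fG fC fE]] := build _ _ _ _ _ _ eta g l HN HI flI sinj lfN gmap Sl' _ S
  (fun t Tt => Tt) (fun t xi _ Sxi _ => Sxi) (leqnn _).
by exists f; split => //; split.
Qed.
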